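(* Fix a positive integer $m$, graphs $H_1,\dots,H_k$ each with exactly $m$ edges, a finite complete graph $K$ on at least two vertices, and real constants $\gamma_1,\dots,\gamma_k$. Set \[ \mathcal{O}=\max_{\nu\in\Delta^K}\sum_{i=1}^k\gamma_i\,\beta(\nu;H_i). \] If $\mu\in\Delta^K$ achieves $\mathcal{O}$, then \begin{align*} m\cdot\mathcal{O}\cdot\mu(e)&=\sum_{i=1}^k\gamma_i\sum_{\substack{H\in\mathrm{cp}(K,H_i),\\ E(H)\ni e}}\mu(H)\quad\text{for each } e\in E(K),\\ m\cdot\mathcal{O}\cdot\bar\mu(x)&=\sum_{i=1}^k\gamma_i\sum_{\substack{H\in\mathrm{cp}(K,H_i),\\ V(H)\ni x}}\deg_H(x)\,\mu(H)\quad\text{for each } x\in V(K). \end{align*}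
   Context: $\Delta^K$ is the set of probability measures on $E(K)$ (edge probability measures on $K$). $\mathrm{cp}(K,H)$ is the set of (unlabeled, not necessarily induced) subgraphs of $K$ isomorphic to $H$. For $\mu\in\Delta^K$ and a subgraph $H\subseteq K$, $\mu(H)=\prod_{e\in E(H)}\mu(e)$; $\beta(\mu;H)=\sum_{H'\in\mathrm{cp}(K,H)}\mu(H')$; and $\bar\mu(x)=\sum_{y\in V(K)\setminus\{x\}}\mu(xy)$. *)

(* Defs.v *)
From HB Require Import structures.
From mathcomp Require Import all_boot all_order all_algebra.
From mathcomp Require Import reals.
Set Implicit Arguments. Unset Strict Implicit. Unset Printing Implicit Defensive.
Import Order.TTheory GRing.Theory Num.Theory.
Local Open Scope ring_scope.

Record sgraph := SGraph {
  nv : nat;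
  gE : {set {set 'I_nv}};
  gE_ok : [forall e in gE, #|e| == 2%N] }.

Section Defs.
Variable V : finType.   (* vertices of the complete graph K = K_V *)
Variable R : realType.

Definition is_edge (e : {set V}) : bool := #|e| == 2%N.

(* edge probability measures on K (values off E(K) are irrelevant) *)
Definition in_Delta (mu : {set V} -> R) : Prop :=
  (forall e, is_edge e -> 0 <= mu e) /\ \sum_(e | is_edge e) mu e = 1.

Definition subgr := ({set V} * {set {set V}})%type.

(* cp(K,H): (unlabeled, not necessarily induced) subgraphs of K isomorphic to H *)
Definition is_copy (H : sgraph) (c : subgr) : bool :=
  [exists f : {ffun 'I_(nv H) -> V},
     [&& injectiveb f, c.1 == f @: setT & c.2 == [set f @: e | e : {set 'I_(nv H)} in gE H]]].

Definition muH (mu : {set V} -> R) (c : subgr) : R := \prod_(e in c.2) mu e.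

Definition beta (mu : {set V} -> R) (H : sgraph) : R :=
  \sum_(c | is_copy H c) muH mu c.

Definition degc (c : subgr) (x : V) : nat := #|[set e in c.2 | x \in e]|.

Definition mubar (mu : {set V} -> R) (x : V) : R :=
  \sum_(y | y != x) mu [set x; y].

End Defs.

(* Main.v *)
Require Import Defs.
From HB Require Import structures.
From mathcomp Require Import all_boot all_order all_algebra.
From mathcomp Require Import reals.
From mathcomp Require Import ring lra.
Import Order.TTheory GRing.Theory Num.Theory.
Local Open Scope ring_scope.

Lemma copy_facts (V : finType) (G : sgraph) (c : subgr V) :
  is_copy G c ->
  (forall e, e \in c.2 -> is_edge e) /\ #|c.2| = #|gE G| /\
  (forall e x, e \in c.2 -> x \in e -> x \in c.1).
Proof.
case/existsP => f /and3P [/injectiveP finj /eqP -> /eqP ->] /=.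
split; last split.
- move=> e /imsetP [e0 He0 ->]; rewrite /is_edge card_imset //.
  by have /forallP /(_ e0) := gE_ok G; rewrite He0.
- by rewrite card_imset //; apply: imset_inj.
- move=> e x /imsetP [e0 He0 ->] /imsetP [y _ ->].
  by apply: imset_f.
Qed.

Lemma prodD1 {R : comNzRingType} {I : finType} (a : I) {A : {set I}} {F : I -> R} :
  a \in A -> \prod_(i in A) F i = F a * \prod_(i in A :\ a) F i.
Proof. exact: big_setD1. Qed.

Lemma prod_pert (R : realType) (V : finType) (mu : {set V} -> R) (e e' : {set V})
  (t : R) (S : {set {set V}}) (nu : {set V} -> R) : e != e' ->
  nu e = mu e - t -> nu e' = mu e' + t ->
  (forall g, g != e -> g != e' -> nu g = mu g) ->
  \prod_(g in S) nu g =
  \prod_(g in S) mu g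
  + t * ((if e' \in S then \prod_(g in S :\ e') mu g else 0)
         - (if e \in S then \prod_(g in S :\ e) mu g else 0))
  - t ^+ 2 * (if (e \in S) && (e' \in S) then \prod_(g in S :\ e :\ e') mu g else 0).
Proof.
move=> nee' nue nue' nuE.
have Hswap : S :\ e' :\ e = S :\ e :\ e'.
  by rewrite !setDDl setUC.
case: (boolP (e \in S)) => eS; case: (boolP (e' \in S)) => e'S /=.
- have e'Se : e' \in S :\ e by rewrite !inE eq_sym nee'.
  have eSe' : e \in S :\ e' by rewrite !inE nee'.
  rewrite (prodD1 e eS) (prodD1 e' e'Se) /=.
  rewrite [X in _ = X + _ - _](prodD1 e eS) (prodD1 e' e'Se) /=.
  rewrite (prodD1 e eSe') Hswap.
  rewrite (eq_bigr mu); last first.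
    by move=> g; rewrite !inE => /and3P [h1 h2 _]; apply: nuE.
  rewrite nue nue'.
  ring.
- rewrite (prodD1 e eS) [X in _ = X + _ - _](prodD1 e eS) /=.
  rewrite (eq_bigr mu); last first.
    move=> g; rewrite !inE => /andP [h1 h2]; apply: nuE => //.
    by apply: contraNneq e'S => <-.
  rewrite nue.
  ring.
- rewrite (prodD1 e' e'S) [X in _ = X + _ - _](prodD1 e' e'S) /=.
  rewrite (eq_bigr mu); last first.
    move=> g; rewrite !inE => /andP [h1 h2]; apply: nuE => //.
    by apply: contraNneq eS => <-.
  rewrite nue'.
  ring.
- rewrite (eq_bigr mu); last first.
    move=> g gS; apply: nuE.
    by apply: contraNneq eS => <-.
    by apply: contraNneq e'S => <-.
  ring.
Qed.

Lemma sum_lin (R : realType) (I : finType) (P : pred I) (t : R) (x y z w : I -> R) :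
  \sum_(i | P i) (x i + t * (y i - z i) - t ^+ 2 * w i) =
  \sum_(i | P i) x i + t * (\sum_(i | P i) y i - \sum_(i | P i) z i)
   - t ^+ 2 * \sum_(i | P i) w i.
Proof.
rewrite big_split /= sumrN big_split /= -!mulr_sumr -sumrB.
by [].
Qed.

Definition Fv (R : realType) (V : finType) k (H : 'I_k -> sgraph) (gamma : 'I_k -> R)
  (nu : {set V} -> R) := \sum_i gamma i * beta nu (H i).

Definition Dd (R : realType) (V : finType) k (H : 'I_k -> sgraph) (gamma : 'I_k -> R)
  (mu : {set V} -> R) e := \sum_i gamma i * \sum_(c | is_copy (H i) c)
     (if e \in c.2 then \prod_(g in c.2 :\ e) mu g else 0).

Definition Bd (R : realType) (V : finType) k (H : 'I_k -> sgraph) (gamma : 'I_k -> R)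
  (mu : {set V} -> R) e e' := \sum_i gamma i * \sum_(c | is_copy (H i) c)
     (if (e \in c.2) && (e' \in c.2) then \prod_(g in c.2 :\ e :\ e') mu g else 0).

Arguments Fv {R V k}.
Arguments Dd {R V k}.
Arguments Bd {R V k}.

Lemma F_pert (R : realType) (V : finType) k (H : 'I_k -> sgraph) (gamma : 'I_k -> R)
  (mu nu : {set V} -> R) (e e' : {set V}) (t : R) : e != e' ->
  nu e = mu e - t -> nu e' = mu e' + t ->
  (forall g, g != e -> g != e' -> nu g = mu g) ->
  Fv H gamma nu = Fv H gamma mu + t * (Dd H gamma mu e' - Dd H gamma mu e)
     - t ^+ 2 * Bd H gamma mu e e'.
Proof.
move=> nee' nue nue' nuE.
rewrite /Fv /Dd /Bd -sum_lin; apply: eq_bigr => i _.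
rewrite /beta /muH (eq_bigr _ (fun (c : subgr V) _ => @prod_pert _ _ mu e e' t c.2 nu nee' nue nue' nuE)).
rewrite sum_lin; ring.
Qed.

Lemma pert_Delta (R : realType) (V : finType) (mu : {set V} -> R) (e e' : {set V}) (t : R) :
  in_Delta mu -> is_edge e -> is_edge e' -> e != e' -> 0 <= t <= mu e ->
  in_Delta (fun g => if g == e' then mu g + t else if g == e then mu g - t else mu g).
Proof.
move=> [mu0 mu1] Ee Ee' nee' /andP [t0 te].
split.
- move=> g Eg /=; case: eqP => [->|_]; first by rewrite addr_ge0 // mu0.
  case: eqP => [->|_]; first by rewrite subr_ge0.
  exact: mu0.
- rewrite -mu1 (bigD1 e') //= eqxx [in RHS](bigD1 e') //=.
  rewrite (bigD1 e) /=; last by rewrite Ee nee'.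
  rewrite [in RHS](bigD1 e) /=; last by rewrite Ee nee'.
  rewrite eqxx (negbTE nee').
  rewrite (eq_bigr mu); last first.
    by move=> g /andP [/andP [_ /negbTE ->] /negbTE ->].
  ring.
Qed.

Lemma small_t (R : realType) (a b d : R) : 0 < d ->
  (forall t, 0 < t -> t <= d -> t * a - t ^+ 2 * b <= 0) -> a <= 0.
Proof.
move=> d0 h; rewrite leNgt; apply/negP => a0.
pose t := Num.min d (a / (`|b| + 1)).
have b1 : 0 < `|b| + 1 by rewrite ltr_wpDl.
have t0 : 0 < t by rewrite lt_min d0 divr_gt0.
have td : t <= d by rewrite ge_min lexx.
have ta : t * (`|b| + 1) <= a.
  by rewrite -ler_pdivlMr // ge_min lexx orbT.
have := h t t0 td.
have bb : b <= `|b| := ler_norm b.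
have tb : t ^+ 2 * b <= t ^+ 2 * `|b| by rewrite ler_wpM2l // sqr_ge0.
have : 0 < t * (a - t * `|b|).
  by apply: mulr_gt0 => //; rewrite subr_gt0; nra.
nra.
Qed.

Lemma kkt (R : realType) (V : finType) k (H : 'I_k -> sgraph) (gamma : 'I_k -> R)
  (mu : {set V} -> R) (e e' : {set V}) :
  in_Delta mu ->
  (forall nu : {set V} -> R, in_Delta nu -> Fv H gamma nu <= Fv H gamma mu) ->
  is_edge e -> is_edge e' -> 0 < mu e ->
  Dd H gamma mu e' <= Dd H gamma mu e.
Proof.
move=> Dmu opt Ee Ee' mue.
have [<-|nee'] := eqVneq e e'; first by [].
rewrite -subr_le0.
apply: (@small_t _ _ (Bd H gamma mu e e') (mu e) mue) => t t0 te.
pose nu := fun g => if g == e' then mu g + t else if g == e then mu g - t else mu g.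
have := opt nu (@pert_Delta _ _ mu e e' t Dmu Ee Ee' nee' _).
rewrite (@F_pert _ _ _ H gamma mu nu e e' t nee').
- move=> h; have {}h := h ltac:(by rewrite (ltW t0) te).
  lra.
- by rewrite /nu eqxx (negbTE nee').
- by rewrite /nu eqxx.
- by move=> g /negbTE h1 /negbTE h2; rewrite /nu h1 h2.
Qed.

Lemma muD (R : realType) (V : finType) k (H : 'I_k -> sgraph) (gamma : 'I_k -> R)
  (mu : {set V} -> R) (e : {set V}) :
  mu e * Dd H gamma mu e =
  \sum_i gamma i * \sum_(c | is_copy (H i) c) (if e \in c.2 then muH mu c else 0).
Proof.
rewrite /Dd mulr_sumr; apply: eq_bigr => i _.
rewrite mulrCA mulr_sumr; congr (_ * _); apply: eq_bigr => c _.
case: ifP => ec; last by rewrite mulr0.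
by rewrite /muH (prodD1 e ec).
Qed.

Lemma euler (R : realType) (V : finType) (m k : nat) (H : 'I_k -> sgraph)
  (gamma : 'I_k -> R) (mu : {set V} -> R) :
  (forall i, #|gE (H i)| = m) ->
  \sum_(e | is_edge e) mu e * Dd H gamma mu e = m%:R * Fv H gamma mu.
Proof.
move=> Hm.
under eq_bigr do rewrite muD.
rewrite exchange_big /Fv mulr_sumr; apply: eq_bigr => i _.
rewrite -mulr_sumr mulrCA; congr (_ * _).
rewrite exchange_big /beta mulr_sumr; apply: eq_bigr => c cc.
rewrite -big_mkcondr /=.
have [E [C _]] := @copy_facts _ _ _ cc.
rewrite (eq_bigl (fun e => e \in c.2)); last first.
  by move=> e; case ec: (e \in c.2); rewrite ?andbF ?andbT ?E.
by rewrite sumr_const C Hm mulr_natl.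
Qed.

Lemma edge_claim (R : realType) (V : finType) (m k : nat) (H : 'I_k -> sgraph)
  (gamma : 'I_k -> R) (mu : {set V} -> R) (e : {set V}) :
  (forall i, #|gE (H i)| = m) ->
  in_Delta mu ->
  (forall nu : {set V} -> R, in_Delta nu -> Fv H gamma nu <= Fv H gamma mu) ->
  is_edge e -> m%:R * Fv H gamma mu * mu e = mu e * Dd H gamma mu e.
Proof.
move=> Hm Dmu opt Ee.
have [mu0 mu1] := Dmu.
have := mu0 e Ee; rewrite le_eqVlt => /orP [/eqP <-| pos].
  by rewrite !mul0r mulr0.
suff -> : Dd H gamma mu e = m%:R * Fv H gamma mu by rewrite mulrC.
apply/le_anti/andP; split.
- rewrite -(@euler _ _ _ _ H gamma mu Hm).
  rewrite -[Dd H gamma mu e]mul1r -mu1 mulr_suml.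
  apply: ler_sum => e' Ee'.
  have := mu0 e' Ee'; rewrite le_eqVlt => /orP [/eqP <-| pos'].
    by rewrite !mul0r.
  rewrite ler_wpM2l ?(ltW pos') //.
  exact: (@kkt _ _ _ H gamma mu e' e Dmu opt Ee' Ee pos').
- rewrite -(@euler _ _ _ _ H gamma mu Hm).
  rewrite -[Dd H gamma mu e]mul1r -mu1 mulr_suml.
  apply: ler_sum => e' Ee'.
  rewrite ler_wpM2l ?mu0 //.
  exact: (@kkt _ _ _ H gamma mu e e' Dmu opt Ee Ee' pos).
Qed.

Lemma reidx (R : realType) (V : finType) (x : V) (G : {set V} -> R) :
  \sum_(y | y != x) G [set x; y] = \sum_(e | is_edge e && (x \in e)) G e.
Proof.
pose h' := fun e : {set V} => odflt x [pick y in e :\ x].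
have pick1 y : [pick z in [set y]] = Some y.
  case: pickP => [z|]; first by rewrite inE => /eqP ->.
  by move/(_ y); rewrite set11.
rewrite (reindex_onto (fun y => [set x; y]) h').
- apply: eq_bigl => y /=.
  case: (eqVneq x y) => [<-|nxy] /=; first by rewrite /is_edge setUid cards1.
  rewrite /is_edge cards2 nxy set21 /=.
  rewrite /h' setU1K ?pick1 ?eqxx 1?eq_sym //.
  by rewrite inE.
- move=> e /andP [/eqP E2 xe].
  have : #|e :\ x| = 1%N by move: E2; rewrite (cardsD1 x e) xe => -[].
  move/eqP/cards1P => [y Ey].
  by rewrite /h' Ey pick1 /= -Ey setD1K.
Qed.

Lemma deg_sum (R : realType) (V : finType) (G : sgraph) (c : subgr V) (x : V) (X : R) :
  is_copy G c ->
  \sum_(e | is_edge e && (x \in e)) (if e \in c.2 then X else 0) =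
  (if x \in c.1 then (degc c x)%:R * X else 0).
Proof.
move=> cc; have [E [_ Cx]] := @copy_facts _ _ _ cc.
rewrite -big_mkcondr /=.
rewrite (eq_bigl (fun e => e \in [set e in c.2 | x \in e])); last first.
  move=> e; rewrite inE; case ec: (e \in c.2); rewrite ?andbF ?andbT ?E //.
rewrite sumr_const /degc.
case: ifP => xc; first by rewrite mulr_natl.
suff -> : [set e in c.2 | x \in e] = set0 by rewrite cards0 mulr0n.
apply/setP => e; rewrite !inE.
apply/negbTE/andP => -[ec xe].
by move: (Cx e x ec xe); rewrite xc.
Qed.

Theorem lemma4p3 (R : realType) (V : finType) (m k : nat)
    (H : 'I_k -> sgraph) (gamma : 'I_k -> R) (mu : {set V} -> R) :
  (0 < m)%N ->
  (forall i, #|gE (H i)| = m) ->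
  (2 <= #|V|)%N ->
  in_Delta mu ->
  (forall nu : {set V} -> R, in_Delta nu ->
     \sum_i gamma i * beta nu (H i) <= \sum_i gamma i * beta mu (H i)) ->
  let O := \sum_i gamma i * beta mu (H i) in
  (forall e : {set V}, is_edge e ->
     m%:R * O * mu e =
     \sum_i gamma i * \sum_(c | is_copy (H i) c && (e \in c.2)) muH mu c) /\
  (forall x : V,
     m%:R * O * mubar mu x =
     \sum_i gamma i *
       \sum_(c | is_copy (H i) c && (x \in c.1)) (degc c x)%:R * muH mu c).
Proof.
move=> m0 Hm V2 Dmu opt O.
have optF : forall nu, in_Delta nu -> Fv H gamma nu <= Fv H gamma mu := opt.
have EC e : is_edge e -> m%:R * O * mu e = \sum_i gamma i *
    \sum_(c | is_copy (H i) c) (if e \in c.2 then muH mu c else 0).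
  by move=> Ee; rewrite (@edge_claim _ _ m k H gamma mu e Hm Dmu optF Ee) muD.
split.
- move=> e Ee; rewrite EC //; apply: eq_bigr => i _.
  by rewrite [in RHS]big_mkcondr.
- move=> x; rewrite /mubar mulr_sumr.
  rewrite (eq_bigr (fun y => \sum_i gamma i * \sum_(c | is_copy (H i) c)
     (if [set x; y] \in c.2 then muH mu c else 0))); last first.
    by move=> y yx; apply: EC; rewrite /is_edge cards2 (eq_sym x) yx.
  rewrite (@reidx _ _ x (fun e => \sum_i gamma i * \sum_(c | is_copy (H i) c)
     (if e \in c.2 then muH mu c else 0))).
  rewrite exchange_big; apply: eq_bigr => i _.
  rewrite -mulr_sumr; congr (_ * _).
  rewrite exchange_big [in RHS]big_mkcondr; apply: eq_bigr => c cc.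
  exact: (@deg_sum _ _ _ c x (muH mu c) cc).
Qed.
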